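(* Let $\mathbb{K}\in\{\mathbb{R},\mathbb{C}\}$, $\star\in\{*,T\}$, $\epsilon_1,\epsilon_2\in\{1,-1\}$, and let $Q(\lambda)=\lambda^2M+\lambda D+K\in\mathbb{K}^{n\times n}[\lambda]$ satisfy $M^\star=\epsilon_1M$, $D^\star=\epsilon_2D$, $K^\star=\epsilon_1K$. If $(X,\Lambda)\in\mathbb{K}^{n\times p}\times\mathbb{K}^{p\times p}$ is an invariant pair of $Q(\lambda)$ with $\sigma(\epsilon_1\epsilon_2\Lambda^\star)\cap\sigma(\Lambda)=\emptyset$, then $X^\star MX\Lambda+\epsilon_1\epsilon_2\Lambda^\star X^\star MX+X^\star DX=0$.
   Context: For a matrix $A$, $A^*$ is the conjugate transpose and $A^T$ the transpose; $A^\star$ means $A^*$ if $\star=*$ and $A^T$ if $\star=T$. $\sigma(A)$ is the spectrum. A pair $(X,\Lambda)$ is an invariant pair of $Q(\lambda)$ if $MX\Lambda^2+DX\Lambda+KX=0$. *)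

(* Defs.v *)
From HB Require Import structures.
From mathcomp Require Import all_boot all_order all_algebra.
From mathcomp Require Import reals.
From mathcomp.real_closed Require Import complex.
Set Implicit Arguments. Unset Strict Implicit. Unset Printing Implicit Defensive.
Import Order.TTheory GRing.Theory Num.Theory.
Local Open Scope ring_scope.

(* Generic setting: matrices over a field K, whose spectra are taken in an
   algebraically closed field C via a ring embedding iota : K -> C, and an
   entrywise conjugation conjK on K.  Star flag: true = conjugate transpose
   ( * ), false = plain transpose ( T ). *)
Section Generic.
Variables (K C : fieldType) (iota : {rmorphism K -> C}) (conjK : K -> K).

Definition mxstar (star : bool) m n (A : 'M[K]_(m, n)) : 'M[K]_(n, m) :=
  if star then map_mx conjK A^T else A^T.

Definition spectrum p (A : 'M[K]_p) : pred C :=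
  [pred z | root (char_poly (map_mx iota A)) z].

Definition invariant_pair n p (M D Kq : 'M[K]_n) (X : 'M[K]_(n, p))
  (L : 'M[K]_p) : Prop :=
  M *m X *m (L *m L) + D *m X *m L + Kq *m X = 0.

Definition cor24_statement : Prop :=
  forall (star : bool) (e1 e2 : K), (e1 = 1 \/ e1 = -1) -> (e2 = 1 \/ e2 = -1) ->
  forall (n p : nat) (M D Kq : 'M[K]_n) (X : 'M[K]_(n, p)) (L : 'M[K]_p),
    mxstar star M = e1 *: M -> mxstar star D = e2 *: D ->
    mxstar star Kq = e1 *: Kq ->
    invariant_pair M D Kq X L ->
    (forall z : C, ~ (spectrum ((e1 * e2) *: mxstar star L) z /\ spectrum L z)) ->
    mxstar star X *m M *m X *m L
      + (e1 * e2) *: (mxstar star L *m mxstar star X *m M *m X)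
      + mxstar star X *m D *m X = 0.
End Generic.

Definition real_case (R : realType) : Prop :=
  @cor24_statement R R[i] (real_complex R) id.

Definition complex_case (R : realType) : Prop :=
  @cor24_statement R[i] R[i] idfun (fun z => z^*).

(* Main.v *)
Require Import Defs.
From HB Require Import structures.
From mathcomp Require Import all_boot all_order all_algebra.
From mathcomp Require Import reals.
From mathcomp.real_closed Require Import complex.
Set Implicit Arguments. Unset Strict Implicit. Unset Printing Implicit Defensive.
Import Order.TTheory GRing.Theory Num.Theory.
Local Open Scope ring_scope.

Lemma sylv (K : fieldType) (C : closedFieldType) (iota : {rmorphism K -> C})
  p (B L Z : 'M[K]_p) :
  B *m Z = Z *m L ->
  (forall z, ~ (root (char_poly (map_mx iota B)) z /\
                root (char_poly (map_mx iota L)) z)) -> Z = 0.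
Proof.
case: p B L Z => [|q] B L Z hBZ hsp; first by apply/matrixP => [[]].
have comm r : horner_mx B r *m Z = Z *m horner_mx L r.
  elim/poly_ind: r => [|r c IH]; first by rewrite !rmorph0 mul0mx mulmx0.
  rewrite !rmorphD !rmorphM /= !horner_mx_X !horner_mx_C.
  rewrite mulmxDl mulmxDr -!mulmxE -!mulmxA hBZ !mulmxA IH -!mulmxA.
  by rewrite mul_scalar_mx mul_mx_scalar.
have cp : coprimep (char_poly L) (char_poly B).
  rewrite -(coprimep_map iota) !map_char_poly.
  apply: Pdiv.ClosedField.root_coprimep => x rL; apply/negP => rB.
  by apply: (hsp x); split.
case/Bezout_eq1_coprimepP: cp => [[u v]] /= e.
have : horner_mx B (u * char_poly L + v * char_poly B) *m Z = Z.
  by rewrite e rmorph1 mul1mx.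
rewrite rmorphD !rmorphM /= mulmxDl -!mulmxE -!mulmxA comm.
by rewrite !Cayley_Hamilton !(mulmx0, mul0mx, addr0) => <-.
Qed.

Section Star.
Variables (K : fieldType) (f : {rmorphism K -> K}).
Hypothesis fK : involutive f.

Definition st m n (A : 'M[K]_(m, n)) : 'M_(n, m) := map_mx f A^T.

Lemma stM m n k (A : 'M[K]_(m, n)) (B : 'M[K]_(n, k)) : st (A *m B) = st B *m st A.
Proof. by rewrite /st trmx_mul map_mxM. Qed.
Lemma stK m n (A : 'M[K]_(m, n)) : st (st A) = A.
Proof. by apply/matrixP => i j; rewrite !mxE fK. Qed.
Lemma stZ m n c (A : 'M[K]_(m, n)) : st (c *: A) = f c *: st A.
Proof. by apply/matrixP => i j; rewrite !mxE rmorphM. Qed.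
Lemma stD m n (A B : 'M[K]_(m, n)) : st (A + B) = st A + st B.
Proof. by apply/matrixP => i j; rewrite !mxE rmorphD. Qed.
Lemma st0 m n : st (0 : 'M[K]_(m, n)) = 0.
Proof. by apply/matrixP => i j; rewrite !mxE rmorph0. Qed.

Lemma main (C : closedFieldType) (iota : {rmorphism K -> C}) (e1 e2 : K) :
  (e1 = 1 \/ e1 = -1) -> (e2 = 1 \/ e2 = -1) ->
  forall n p (M D Kq : 'M[K]_n) (X : 'M[K]_(n, p)) (L : 'M[K]_p),
  st M = e1 *: M -> st D = e2 *: D -> st Kq = e1 *: Kq ->
  M *m X *m (L *m L) + D *m X *m L + Kq *m X = 0 ->
  (forall z, ~ (root (char_poly (map_mx iota ((e1 * e2) *: st L))) z /\
                root (char_poly (map_mx iota L)) z)) ->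
  st X *m M *m X *m L + (e1 * e2) *: (st L *m st X *m M *m X)
    + st X *m D *m X = 0.
Proof.
move=> he1 he2 n p M D Kq X L hM hD hK hinv hsp.
have fe1 : f e1 = e1 by case: he1 => ->; rewrite ?rmorphN rmorph1.
have fe2 : f e2 = e2 by case: he2 => ->; rewrite ?rmorphN rmorph1.
have e11 : e1 * e1 = 1 by case: he1 => ->; rewrite ?mulrNN mulr1.
have e22 : e2 * e2 = 1 by case: he2 => ->; rewrite ?mulrNN mulr1.
have ee : (e1 * e2) * (e1 * e2) = 1 by rewrite mulrACA e11 e22 mulr1.
have E1 : st X *m M *m X *m L *m L + st X *m D *m X *m L + st X *m Kq *m X = 0.
  by move: (congr1 (mulmx (st X)) hinv); rewrite mulmx0 !mulmxDr !mulmxA.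
have sA : st (st X *m M *m X) = e1 *: (st X *m M *m X).
  by rewrite !stM stK hM -scalemxAl -scalemxAr mulmxA.
have sB : st (st X *m D *m X) = e2 *: (st X *m D *m X).
  by rewrite !stM stK hD -scalemxAl -scalemxAr mulmxA.
have sK : st (st X *m Kq *m X) = e1 *: (st X *m Kq *m X).
  by rewrite !stM stK hK -scalemxAl -scalemxAr mulmxA.
have E2 := congr1 (@st _ _) E1.
rewrite !stD st0 ![st (_ *m L)]stM sA sB sK in E2.
rewrite -!scalemxAr in E2.
move/eqP: E1; rewrite addr_eq0 => /eqP E1.
move/eqP: E2; rewrite addr_eq0 => /eqP /(congr1 (fun Y => e1 *: Y)).
rewrite scalerDr !scalerA e11 scale1r scalerN scalerA e11 scale1r => E2.
rewrite -(mulmxA (st L) (st X) M) -(mulmxA (st L) (st X *m M) X).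
move: E1 E2 hsp; set e := e1 * e2; set A := st X *m M *m X.
set Bd := st X *m D *m X; set Kx := st X *m Kq *m X; set sL := st L.
move=> E1 E2 hsp.
have H : sL *m (sL *m A) + e *: (sL *m Bd) = A *m L *m L + Bd *m L.
  by rewrite E2 E1.
apply: (sylv (B := e *: sL) _ hsp).
rewrite !mulmxDr !mulmxDl -!scalemxAl -!scalemxAr !scalerA ee scale1r.
by rewrite -addrA H addrCA addrA mulmxA.
Qed.
End Star.

Lemma main2 (K : fieldType) (C : closedFieldType) (iota : {rmorphism K -> C})
  (conjK : K -> K) (star : bool) (f : {rmorphism K -> K}) (fK : involutive f) :
  (forall m k (A : 'M[K]_(m, k)), mxstar conjK star A = st f A) ->
  forall (e1 e2 : K), (e1 = 1 \/ e1 = -1) -> (e2 = 1 \/ e2 = -1) ->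
  forall (n p : nat) (M D Kq : 'M[K]_n) (X : 'M[K]_(n, p)) (L : 'M[K]_p),
    mxstar conjK star M = e1 *: M -> mxstar conjK star D = e2 *: D ->
    mxstar conjK star Kq = e1 *: Kq ->
    invariant_pair M D Kq X L ->
    (forall z : C, ~ (spectrum iota ((e1 * e2) *: mxstar conjK star L) z /\ spectrum iota L z)) ->
    mxstar conjK star X *m M *m X *m L
      + (e1 * e2) *: (mxstar conjK star L *m mxstar conjK star X *m M *m X)
      + mxstar conjK star X *m D *m X = 0.
Proof.
move=> hs e1 e2 he1 he2 n p M D Kq X L; rewrite !hs => hM hD hK hinv hsp.
exact: (main fK he1 he2 hM hD hK hinv hsp).
Qed.

Theorem corollary2p4 (R : realType) : real_case R /\ complex_case R.
Proof.
split.
  move=> star; apply: (@main2 _ _ _ _ star idfun) => // m k A.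
  by case: star; rewrite /mxstar /st map_mx_id.
move=> [|]; first by apply: (@main2 _ _ _ _ true Num.conj) => //; exact: conjCK.
by apply: (@main2 _ _ _ _ false idfun) => // m k A; rewrite /mxstar /st map_mx_id.
Qed.
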